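(* Let $A$ be a finite-dimensional alternative algebra over a field of characteristic different from $2$ such that every linear endomorphism of $A$ is a quasiderivation, i.e. $QDer(A)=End(A)$. Then either $A$ is a field or $A$ has zero multiplication.
   Context: An algebra is alternative if $(x,x,y)=(x,y,y)=0$ identically, where $(x,y,z)=(xy)z-x(yz)$. A linear map $f:A\to A$ is a quasiderivation if there exists a linear map $Q:A\to A$ with $Q(xy)=f(x)y+xf(y)$ for all $x,y\in A$; $QDer(A)$ is the set of quasiderivations and $End(A)$ the set of all linear endomorphisms of $A$. *)

(* Defs.v *)
From HB Require Import structures.
From mathcomp Require Import all_boot all_order all_algebra.
Set Implicit Arguments. Unset Strict Implicit. Unset Printing Implicit Defensive.
Import GRing.Theory.
Local Open Scope ring_scope.

(* A (not necessarily associative or unital) finite-dimensional algebra over a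
   field F is modelled as a vectType F (finite-dimensional F-vector space)
   together with a bilinear product [mul]. *)

Definition bilinear_mul (F : fieldType) (A : vectType F) (mul : A -> A -> A) :=
  (forall (a : F) (x y z : A), mul (a *: x + y) z = a *: mul x z + mul y z) /\
  (forall (a : F) (x y z : A), mul z (a *: x + y) = a *: mul z x + mul z y).

Definition assoc_of (F : fieldType) (A : vectType F) (mul : A -> A -> A)
  (x y z : A) : A := mul (mul x y) z - mul x (mul y z).

Definition alternative (F : fieldType) (A : vectType F) (mul : A -> A -> A) :=
  forall x y : A, assoc_of mul x x y = 0 /\ assoc_of mul x y y = 0.

Definition quasiderivation (F : fieldType) (A : vectType F) (mul : A -> A -> A)
  (f : 'End(A)) :=
  exists Q : 'End(A), forall x y : A, Q (mul x y) = mul (f x) y + mul x (f y).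

Definition all_quasiderivations (F : fieldType) (A : vectType F)
  (mul : A -> A -> A) := forall f : 'End(A), quasiderivation mul f.

Definition is_field_alg (F : fieldType) (A : vectType F) (mul : A -> A -> A) :=
  exists e : A,
    [/\ e != 0,
        forall x, mul e x = x /\ mul x e = x,
        forall x y z, mul (mul x y) z = mul x (mul y z),
        forall x y, mul x y = mul y x
      & forall x, x != 0 -> exists y, mul x y = e].

Definition zero_mul (F : fieldType) (A : vectType F) (mul : A -> A -> A) :=
  forall x y : A, mul x y = 0.

(* Main.v *)
Require Import Defs.
From HB Require Import structures.
From mathcomp Require Import all_boot all_order all_algebra.
From Stdlib Require Import Classical.
Import GRing.Theory.
Set Implicit Arguments. Unset Strict Implicit.
Local Open Scope ring_scope.

Definition rk1 (F : fieldType) (A : vectType F) n (X : n.-tuple A) (i : 'I_n) (u : A) (z : A) : A := coord X i z *: u.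
Fact rk1_lin (F : fieldType) (A : vectType F) n (X : n.-tuple A) (i : 'I_n) (u : A) : linear (rk1 X i u).
Proof. by move=> a z w; rewrite /rk1 linearP scalerDl scalerA. Qed.
HB.instance Definition _ (F : fieldType) (A : vectType F) n (X : n.-tuple A) (i : 'I_n) (u : A) :=
  GRing.isLinear.Build F A A *:%R (@rk1 F A n X i u) (@rk1_lin F A n X i u).


Lemma bil_facts (F : fieldType) (A : vectType F) (mul : A -> A -> A) :
  bilinear_mul mul ->
  [/\ forall a x z, mul (a *: x) z = a *: mul x z,
      forall x y z, mul (x + y) z = mul x z + mul y z,
      forall a x z, mul z (a *: x) = a *: mul z x &
      forall x y z, mul z (x + y) = mul z x + mul z y].
Proof.
move=> [Hl Hr].
have l0 z : mul 0 z = 0.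
  have := Hl 1 0 0 z; rewrite !scale1r addr0 -{1}[mul 0 z]addr0.
  by move/addrI.
have r0 z : mul z 0 = 0.
  have := Hr 1 0 0 z; rewrite !scale1r addr0 -{1}[mul z 0]addr0.
  by move/addrI.
split.
- by move=> a x z; rewrite -[a *: x]addr0 Hl l0 addr0.
- by move=> x y z; have := Hl 1 x y z; rewrite !scale1r.
- by move=> a x z; rewrite -[a *: x]addr0 Hr r0 addr0.
- by move=> x y z; have := Hr 1 x y z; rewrite !scale1r.
Qed.

Lemma QR (F : fieldType) (A : vectType F) (mul : A -> A -> A) n (X : n.-tuple A) (i : 'I_n) (u : A) :
  bilinear_mul mul -> all_quasiderivations mul ->
  exists Q : 'End(A), forall x y,
    Q (mul x y) = coord X i x *: mul u y + coord X i y *: mul x u.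
Proof.
move=> Hb Hq; have [mZl _ mZr _] := bil_facts Hb.
have [Q HQ] := Hq (linfun (rk1 X i u)).
by exists Q => x y; rewrite HQ !lfunE /rk1 /= mZl mZr.
Qed.

Lemma bil_more (F : fieldType) (A : vectType F) (mul : A -> A -> A) :
  bilinear_mul mul ->
  [/\ forall z, mul 0 z = 0, forall z, mul z 0 = 0,
      forall x z, mul (- x) z = - mul x z &
      forall x z, mul z (- x) = - mul z x].
Proof.
move=> Hb; have [mZl _ mZr _] := bil_facts Hb.
split.
- by move=> z; rewrite -(scale0r 0) mZl !scale0r.
- by move=> z; rewrite -(scale0r 0) mZr !scale0r.
- by move=> x z; rewrite -scaleN1r mZl scaleN1r.
- by move=> x z; rewrite -scaleN1r mZr scaleN1r.
Qed.

Lemma coord2 (F : fieldType) (A : vectType F) (y x : A) : free [:: y; x] ->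
  [/\ coord [tuple y; x] ord0 y = 1, coord [tuple y; x] ord0 x = 0,
      coord [tuple y; x] ord_max x = 1 & coord [tuple y; x] ord_max y = 0].
Proof.
move=> fr.
have c := @coord_free _ _ 2 [tuple y; x] _ _ fr.
split.
- exact: (c ord0 ord0).
- exact: (c ord_max ord0).
- exact: (c ord_max ord_max).
- exact: (c ord0 ord_max).
Qed.

Lemma coord1 (F : fieldType) (A : vectType F) (x : A) : x != 0 ->
  coord [tuple x] ord0 x = 1.
Proof.
move=> nz.
have fr : free [tuple x] by rewrite /= seq1_free.
exact: (@coord_free _ _ 1 [tuple x] ord0 ord0 fr).
Qed.

Lemma Z1 (F : fieldType) (A : vectType F) (mul : A -> A -> A) (x y : A) :
  bilinear_mul mul -> all_quasiderivations mul ->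
  free [:: y; x] -> mul x y = 0 -> forall a, mul x a = 0.
Proof.
move=> Hb Hq fr xy0 a.
have [c1 c2 c3 c4] := coord2 fr.
have [Q HQ] := QR [tuple y; x] ord0 a Hb Hq.
have := HQ x y; rewrite xy0 linear0 c1 c2 scale0r add0r scale1r.
by move=> <-.
Qed.

Lemma Z2 (F : fieldType) (A : vectType F) (mul : A -> A -> A) (x : A) :
  bilinear_mul mul -> all_quasiderivations mul ->
  x != 0 -> mul x x = 0 -> forall a, mul a x + mul x a = 0.
Proof.
move=> Hb Hq nz xx0 a.
have c := coord1 nz.
have [Q HQ] := QR [tuple x] ord0 a Hb Hq.
have := HQ x x; rewrite xx0 linear0 c !scale1r.
by move=> <-.
Qed.

Lemma twice0 (F : fieldType) (A : vectType F) (v : A) : (2%:R : F) != 0 -> v + v = 0 -> v = 0.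
Proof.
move=> h2 /eqP; rewrite -mulr2n -scaler_nat scaler_eq0 (negbTE h2) /=.
by move/eqP.
Qed.

Lemma twice0F (F : fieldType) (c : F) : (2%:R : F) != 0 -> c + c = 0 -> c = 0.
Proof.
move=> h2 /eqP; rewrite -mulr2n -mulr_natr mulf_eq0 (negbTE h2) orbF.
by move/eqP.
Qed.

Lemma free2P (F : fieldType) (A : vectType F) (y x : A) :
  free [:: y; x] = (y \notin <[x]>%VS) && (x != 0).
Proof. by rewrite free_cons span_seq1 seq1_free. Qed.

Lemma free2_nz (F : fieldType) (A : vectType F) (y x : A) :
  free [:: y; x] -> y != 0 /\ x != 0.
Proof.
rewrite free2P => /andP [hy hx]; split => //.
by apply: contraNneq hy => ->; rewrite mem0v.
Qed.

Lemma dich (F : fieldType) (A : vectType F) (y x : A) : x != 0 ->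
  free [:: y; x] \/ exists k, y = k *: x.
Proof.
move=> hx; case: (boolP (y \in <[x]>%VS)) => [/vlineP h|h]; [by right|left].
by rewrite free2P h hx.
Qed.

Lemma ex_free (F : fieldType) (A : vectType F) (a b x : A) :
  free [:: a; b] -> x != 0 -> exists y, free [:: y; x].
Proof.
move=> fab hx.
have [ha hb] := free2_nz fab.
case: (dich a hx) => [h|[al ha']]; first by exists a.
case: (dich b hx) => [h|[be hb']]; first by exists b.
exfalso; move: fab; rewrite free2P => /andP [/negP hn _]; apply: hn.
have hbe : be != 0 by apply/eqP => e0; move: hb; rewrite hb' e0 scale0r eqxx.
apply/vlineP; exists (al / be).
by rewrite ha' hb' scalerA mulrVK // unitfE.
Qed.

Lemma mulBr_gen (F : fieldType) (A : vectType F) (mul : A -> A -> A) :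
  bilinear_mul mul -> forall x a b, mul x (a - b) = mul x a - mul x b.
Proof.
move=> Hb x a b; have [_ _ _ mDr] := bil_facts Hb; have [_ _ _ mNr] := bil_more Hb.
by rewrite mDr mNr.
Qed.

Lemma NotInj (F : fieldType) (A : vectType F) (mul : A -> A -> A) (x : A) :
  (2%:R : F) != 0 -> bilinear_mul mul -> alternative mul -> all_quasiderivations mul ->
  (exists y, free [:: y; x]) -> x != 0 -> exists w, w != 0 /\ mul x w = 0.
Proof.
move=> h2 Hb Halt Hq [y fr] hx.
have [mZl mDl mZr mDr] := bil_facts Hb.
have [m0l m0r mNl mNr] := bil_more Hb.
have mBr := mulBr_gen Hb.
apply: NNPP => Hn.
have inj w : mul x w = 0 -> w = 0.
  move=> h; case: (eqVneq w 0) => // hw; exfalso; apply: Hn; by exists w.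
have hp : mul x x != 0 by apply/eqP => /inj h; move: hx; rewrite h eqxx.
have [hy _] := free2_nz fr.
case: (boolP (mul x x \in <[x]>%VS)) => [/vlineP [l hl]|hnp].
- have hl0 : l != 0 by apply/eqP => l0; move: hp; rewrite hl l0 scale0r eqxx.
  pose e := l^-1 *: x.
  have ee : mul e e = e.
    by rewrite /e mZl mZr hl !scalerA -mulrA mulVf // mulr1.
  have inje w : mul e w = 0 -> w = 0.
    move=> h; apply: inj; move: h; rewrite /e mZl => /eqP.
    by rewrite scaler_eq0 invr_eq0 (negbTE hl0) /= => /eqP.
  have lid z : mul e z = z.
    have [h _] := Halt e z; move: h; rewrite /assoc_of ee => /eqP; rewrite subr_eq0 => /eqP h.
    apply/eqP; rewrite -subr_eq0; apply/eqP; apply: inje.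
    by rewrite mBr -h subrr.
  have [c1 c2 c3 c4] := coord2 fr.
  have ce : coord [tuple y; x] ord0 e = 0 by rewrite /e linearZ /= c2 mulr0.
  have yy0 : mul y y = 0.
    have [Q HQ] := QR [tuple y; x] ord0 y Hb Hq.
    have h1 := HQ e (mul y y); have h2' := HQ y y.
    rewrite lid in h1; rewrite h1 ce scale0r add0r lid c1 scale1r in h2'.
    set c := coord _ _ (mul y y) in h2'.
    have hc : c = 0.
      have := f_equal (coord [tuple y; x] ord0) h2'.
      rewrite linearZ /= linearD /= -/c c1 mulr1.
      by move/eqP; rewrite -{1}[c]addr0 => /eqP /addrI /esym.
    by apply: (twice0 h2); rewrite -h2' hc scale0r.
  have ye : mul y e = - y.
    have [Q HQ] := QR [tuple y; x] ord0 e Hb Hq.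
    have := HQ y y; rewrite yy0 linear0 c1 !scale1r lid => /esym/eqP.
    by rewrite addrC addr_eq0 => /eqP.
  have [_ h] := Halt y e; move: h; rewrite /assoc_of ee ye mNl ye !opprK => h.
  by move: hy; rewrite (twice0 h2 h) eqxx.
- have frp : free [:: mul x x; x] by rewrite free2P hnp hx.
  have [c1 c2 c3 c4] := coord2 frp.
  have [Q HQ] := QR [tuple mul x x; x] ord_max x Hb Hq.
  set p := mul x x in frp c1 c2 c3 c4 HQ hp hnp.
  set q := mul x p.
  have hpq : mul p p = mul x q.
    have [h _] := Halt x p; move: h; rewrite /assoc_of -/p => /eqP; rewrite subr_eq0 => /eqP.
    by [].
  have h1 := HQ p p; have h3 := HQ x q.
  rewrite c4 !scale0r addr0 hpq h3 c3 scale1r in h1.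
  set c := coord _ _ q in h1.
  have hq : q = - (c *: x).
    apply/eqP; rewrite -subr_eq0 opprK; apply/eqP; apply: inj.
    by rewrite mDr mZr -/p h1.
  have hc : c = 0.
    apply: (twice0F h2).
    have := f_equal (coord [tuple p; x] ord_max) hq.
    rewrite linearN linearZ /= c3 mulr1 -/c => hcc; by rewrite {1}hcc addNr.
  have q0 : mul x p = 0 by rewrite -/q hq hc scale0r oppr0.
  by move: hp; rewrite (inj _ q0) eqxx.
Qed.

Lemma allzero (F : fieldType) (A : vectType F) (mul : A -> A -> A) (a b : A) :
  (2%:R : F) != 0 -> bilinear_mul mul -> alternative mul -> all_quasiderivations mul ->
  free [:: a; b] -> forall x z, mul x z = 0.
Proof.
move=> h2 Hb Halt Hq fab x.
have [mZl mDl mZr mDr] := bil_facts Hb.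
have [m0l m0r mNl mNr] := bil_more Hb.
case: (eqVneq x 0) => [-> z|hx]; first exact: m0l.
have nI v : v != 0 -> exists w, w != 0 /\ mul v w = 0.
  by move=> hv; apply: (NotInj h2 Hb Halt Hq (ex_free fab hv) hv).
have [w [hw xw]] := nI x hx.
case: (dich w hx) => [frw | [mu hmu]]; first exact: (Z1 Hb Hq frw xw).
have mu0 : mu != 0 by apply/eqP => m0; move: hw; rewrite hmu m0 scale0r eqxx.
have xx0 : mul x x = 0.
  by move/eqP: xw; rewrite hmu mZr scaler_eq0 (negbTE mu0) /= => /eqP.
have anti := Z2 Hb Hq hx xx0.
move=> b'; apply: NNPP => hb.
have hz : mul x b' != 0 by apply/eqP.
have xz : mul x (mul x b') = 0.
  have [h _] := Halt x b'; move: h; rewrite /assoc_of xx0 m0l sub0r => /eqP.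
  by rewrite oppr_eq0 => /eqP.
case: (dich (mul x b') hx) => [frz | [l hl]].
  by apply: hb; exact: (Z1 Hb Hq frz xz b').
have l0 : l != 0 by apply/eqP => l0; move: hz; rewrite hl l0 scale0r eqxx.
have hbnz : b' != 0 by apply/eqP => b0; move: hz; rewrite b0 m0r eqxx.
have [w' [hw' bw']] := nI b' hbnz.
case: (dich w' hbnz) => [frw' | [mu' hmu']].
  have := Z1 Hb Hq frw' bw' x; have := anti b' => /eqP; rewrite addr_eq0 => /eqP -> /eqP.
  by rewrite oppr_eq0 (negbTE hz).
have mu'0 : mu' != 0 by apply/eqP => m0; move: hw'; rewrite hmu' m0 scale0r eqxx.
have bb0 : mul b' b' = 0.
  by move/eqP: bw'; rewrite hmu' mZr scaler_eq0 (negbTE mu'0) /= => /eqP.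
have [_ h] := Halt x b'; move: h; rewrite /assoc_of bb0 m0r subr0 hl mZl hl scalerA => /eqP.
by rewrite scaler_eq0 mulf_eq0 (negbTE l0) (negbTE hx).
Qed.

Theorem mainTheorem13 (F : fieldType) (A : vectType F) (mul : A -> A -> A) :
  (2%:R : F) != 0 ->
  bilinear_mul mul ->
  alternative mul ->
  all_quasiderivations mul ->
  is_field_alg mul \/ zero_mul mul.
Proof.
move=> h2 Hb Halt Hq.
have [mZl mDl mZr mDr] := bil_facts Hb.
have [m0l m0r mNl mNr] := bil_more Hb.
case: (classic (exists a b : A, free [:: a; b])) => [[a [b fab]]|Hno].
  by right => x y; apply: (allzero h2 Hb Halt Hq fab).
case: (classic (exists v : A, v != 0)) => [[v hv]|Hnv]; last first.
  right => x y; case: (eqVneq x 0) => [-> | hx]; first exact: m0l.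
  by exfalso; apply: Hnv; exists x.
have rep x : exists k, x = k *: v.
  case: (dich x hv) => // fr; exfalso; apply: Hno; by exists x, v.
have [l hl] := rep (mul v v).
case: (eqVneq l 0) => [l0|hl0].
  right => x y; have [a ->] := rep x; have [b ->] := rep y.
  by rewrite mZl mZr hl l0 !scale0r !scaler0.
left.
pose e := l^-1 *: v.
have hve : v = l *: e by rewrite /e scalerA mulfV // scale1r.
have ee : mul e e = e.
  by rewrite /e mZl mZr hl !scalerA -mulrA mulVf // mulr1.
have rep' x : exists k, x = k *: e.
  by have [k ->] := rep x; exists (k * l); rewrite hve scalerA.
have hm a b : mul (a *: e) (b *: e) = (a * b) *: e.
  by rewrite mZl mZr ee scalerA.
have enz : e != 0.
  by apply/eqP => e0; move: hv; rewrite hve e0 scaler0 eqxx.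
exists e; split => //.
- move=> x; have [k ->] := rep' x.
  by split; [rewrite -{1}[e]scale1r hm mul1r | rewrite -{2}[e]scale1r hm mulr1].
- move=> x y z; have [a ->] := rep' x; have [b ->] := rep' y; have [c ->] := rep' z.
  by rewrite !hm mulrA.
- move=> x y; have [a ->] := rep' x; have [b ->] := rep' y.
  by rewrite !hm mulrC.
- move=> x; have [k ->] := rep' x => hk.
  have k0 : k != 0 by apply/eqP => k0; move: hk; rewrite k0 scale0r eqxx.
  by exists (k^-1 *: e); rewrite hm mulfV // scale1r.
Qed.
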